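(* Let $\mathcal{C}$ be a cograph on a point set $\mathcal{P}$ whose edge values $\mathcal{C}(P,Q)$ are sets, such that (i) for all distinct points $P,Q,R$, with $a=\mathcal{C}(P,Q)$, $b=\mathcal{C}(Q,R)$, $c=\mathcal{C}(R,P)$, one has $a\cap b=b\cap c=a\cap c$; and (ii) for all distinct points $P,Q,R,S$, $\mathcal{C}(P,Q)\cap\mathcal{C}(R,S)=\mathcal{C}(Q,R)\cap\mathcal{C}(S,P)$. For each $P\in\mathcal{P}$ choose a new element $P_o$, the $P_o$ being pairwise distinct and not belonging to any edge set, and define $P'=\{P_o\}\cup\bigcup_{Q\in\mathcal{P},\,Q\neq P}\mathcal{C}(P,Q)$. Then the sets $P'$ ($P\in\mathcal{P}$) are pairwise distinct and $P'\cap S'=\mathcal{C}(P,S)$ for all distinct $P,S\in\mathcal{P}$; that is, $\{P':P\in\mathcal{P}\}$ is an intersection cograph having the edges of $\mathcal{C}$.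
   Context: A cograph is a function $\mathcal{C}$ assigning to each unordered pair $\{P,Q\}$ of distinct elements of a point set $\mathcal{P}$ a value $\mathcal{C}(P,Q)$. An intersection cograph has as points distinct sets, with the edge between $P$ and $Q$ equal to $P\cap Q$. *)

(* Defs.v *)
From mathcomp Require Import all_boot.
From mathcomp Require Import boolp classical_sets.
Set Implicit Arguments. Unset Strict Implicit. Unset Printing Implicit Defensive.
Local Open Scope classical_set_scope.

(* A set-valued cograph on the point type Pt: a function assigning to every
   unordered pair {P,Q} of distinct points a set C P Q of elements of U.
   We represent it by C : Pt -> Pt -> set U together with symmetry on
   distinct pairs; the values C P P are irrelevant. *)
Definition cograph_sym (Pt U : Type) (C : Pt -> Pt -> set U) : Prop :=
  forall P Q : Pt, P <> Q -> C P Q = C Q P.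

Definition prime_set (Pt U : Type) (C : Pt -> Pt -> set U) (o : Pt -> U)
  (P : Pt) : set U :=
  [set o P] `|` \bigcup_(Q in [set Q | Q <> P]) C P Q.

(* Main.v *)
Require Import Defs.
From mathcomp Require Import all_boot.
From mathcomp Require Import boolp classical_sets.
Local Open Scope classical_set_scope.

Theorem proposition4p1p3 (Pt U : Type) (C : Pt -> Pt -> set U) (o : Pt -> U)
  (Csym : cograph_sym C)
  (Hi : forall P Q R : Pt, P <> Q -> Q <> R -> R <> P ->
     C P Q `&` C Q R = C Q R `&` C R P /\ C Q R `&` C R P = C P Q `&` C R P)
  (Hii : forall P Q R S : Pt, P <> Q -> P <> R -> P <> S -> Q <> R -> Q <> S ->
     R <> S -> C P Q `&` C R S = C Q R `&` C S P)
  (o_inj : injective o)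
  (o_new : forall P Q R : Pt, Q <> R -> ~ C Q R (o P)) :
  (forall P S : Pt, P <> S -> prime_set C o P <> prime_set C o S) /\
  (forall P S : Pt, P <> S -> prime_set C o P `&` prime_set C o S = C P S).
Proof.
split.
  move=> P S PS E.
  have : prime_set C o S (o P) by rewrite -E; left.
  case=> [/o_inj //|[Q /= QS h]].
  exact: (o_new P S Q (nesym QS) h).
move=> P S PS; apply/seteqP; split => x /=.
  case=> [[->|[Q /= QP hQ]]].
    case=> [/o_inj //|[R /= RS h]]; exfalso; exact: (o_new P S R (nesym RS) h).
  case=> [ex|[R /= RS hR]]; first by exfalso; rewrite ex in hQ; exact: (o_new S P Q (nesym QP) hQ).
  have [eQS|nQS] := pselect (Q = S); first by subst.
  have [eRP|nRP] := pselect (R = P); first by subst; rewrite Csym.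
  have hi : forall A, A <> Q -> Q <> S -> S <> A -> C A Q x -> C Q S x -> C S A x.
    move=> A h1 h2 h3 a b.
    have e := congr1 (fun X => X x) (proj1 (Hi A Q S h1 h2 h3)).
    simpl in e.
    have [] : C Q S x /\ C S A x by rewrite -e.
    by [].
  have [eQR|nQR] := pselect (Q = R).
    subst R; rewrite Csym //.
    apply: (hi P) => //; try exact: nesym; by rewrite Csym // in hR; exact: nesym.
  have e := congr1 (fun X => X x) (Hii P Q S R (nesym QP) PS (nesym nRP) nQS nQR (nesym RS)).
  simpl in e.
  have [hQS _] : C Q S x /\ C R P x by rewrite -e.
  rewrite Csym //; apply: (hi P) => //; exact: nesym.
move=> h; split.
  by right; exists S => //; apply: nesym.
by right; exists P => //; rewrite Csym //; exact: nesym.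
Qed.
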